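(* Let $n=2k$ with $k\ge1$, let $\lambda\in\mathbb{F}_{2^n}$ and $f(x)=Tr(\lambda x^{2^k+1})$ for $x\in\mathbb{F}_{2^n}$. Then $f$ is negabent if and only if $\lambda+\lambda^{2^k}\neq 1$. Moreover, $f$ is bent-negabent if and only if $\lambda+\lambda^{2^k}\notin\mathbb{F}_2$.
   Context: $Tr=Tr_1^n$ is the absolute trace $\mathbb{F}_{2^n}\to\mathbb{F}_2$. Fix a self-dual basis of $\mathbb{F}_{2^n}$ over $\mathbb{F}_2$ (basis $\{\alpha_i\}$ with $Tr(\alpha_i\alpha_j)=\delta_{ij}$), identify $\mathbb{F}_{2^n}$ with $\mathbb{F}_2^n$ via coordinates, and let $wt(x)$ be the number of nonzero coordinates of $x$. For $g:\mathbb{F}_{2^n}\to\mathbb{F}_2$: $g$ is bent if $\left|\sum_x(-1)^{g(x)+Tr(\mu x)}\right|=2^{n/2}$ for all $\mu$; $g$ is negabent if $\left|\sum_x(-1)^{g(x)+Tr(\mu x)}\mathrm{i}^{wt(x)}\right|=2^{n/2}$ for all $\mu$ ($\mathrm{i}=\sqrt{-1}$); bent-negabent means both. *)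

(* Defs.v *)
From HB Require Import structures.
From mathcomp Require Import all_boot all_order all_algebra all_field.
Set Implicit Arguments. Unset Strict Implicit. Unset Printing Implicit Defensive.
Import Order.TTheory GRing.Theory Num.Theory.
Local Open Scope ring_scope.

Section Defs.
Variables (F : finFieldType) (n : nat).

Definition tr (x : F) : F := \sum_(i < n) x ^+ (2 ^ i).

Definition trb (x : F) : bool := tr x != 0.

Definition self_dual (alpha : 'I_n -> F) : Prop :=
  forall i j : 'I_n, tr (alpha i * alpha j) = (i == j)%:R.

(* Hamming weight of the coordinate vector of x in the basis alpha *)
Definition wt (alpha : 'I_n -> F) (x : F) : nat :=
  match [pick c : {ffun 'I_n -> bool} | x == \sum_(i < n) (c i)%:R * alpha i] with
  | Some c => #|[set i | c i]|
  | None => 0%N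
  end.

Definition sgn (b : bool) : algC := (-1) ^+ b.

Definition walsh (g : F -> bool) (mu : F) : algC :=
  \sum_(x : F) sgn (g x (+) trb (mu * x)).

Definition nega_walsh (alpha : 'I_n -> F) (g : F -> bool) (mu : F) : algC :=
  \sum_(x : F) sgn (g x (+) trb (mu * x)) * 'i ^+ wt alpha x.

Definition bent (g : F -> bool) : Prop :=
  forall mu : F, `|walsh g mu| = sqrtC (2 ^+ n).

Definition negabent (alpha : 'I_n -> F) (g : F -> bool) : Prop :=
  forall mu : F, `|nega_walsh alpha g mu| = sqrtC (2 ^+ n).

Definition bent_negabent (alpha : 'I_n -> F) (g : F -> bool) : Prop :=
  bent g /\ negabent alpha g.

End Defs.

(* Main.v *)
Require Import Defs.
From HB Require Import structures.
From mathcomp Require Import all_boot all_order all_algebra all_field.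
From mathcomp Require Import ring.
Import GRing.Theory Num.Theory.
Set Implicit Arguments. Unset Strict Implicit. Unset Printing Implicit Defensive.
Local Open Scope ring_scope.

Section Tr.
Variables (F : finFieldType) (n : nat).
Hypothesis hc : 2%N \in [pchar F].
Hypothesis hx : forall x : F, x ^+ (2 ^ n) = x.

Lemma frob2 (x y : F) i : (x + y) ^+ (2 ^ i) = x ^+ (2 ^ i) + y ^+ (2 ^ i).
Proof.
elim: i => [|i IH]; first by rewrite expn0 !expr1.
by rewrite expnSr !exprM IH sqrrD mulr2n addrr_pchar2 // addr0.
Qed.

Lemma tr0 : tr n (0 : F) = 0.
Proof. by rewrite /tr big1 // => i _; rewrite expr0n expn_eq0. Qed.

Lemma trD (x y : F) : tr n (x + y) = tr n x + tr n y.
Proof. by rewrite /tr -big_split; apply: eq_bigr => i _; apply: frob2. Qed.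

Lemma tr_sum (I : finType) (P : pred I) (G : I -> F) :
  tr n (\sum_(i | P i) G i) = \sum_(i | P i) tr n (G i).
Proof. exact: (big_morph _ trD tr0). Qed.

Lemma trX2 (x : F) : tr n (x ^+ 2) = tr n x.
Proof.
rewrite /tr; case: n hx => [|m] hm; first by rewrite !big_ord0.
rewrite big_ord_recr big_ord_recl /= expn0 expr1 -exprM -expnS hm addrC.
by congr (_ + _); apply: eq_bigr => i _; rewrite -exprM -expnS.
Qed.

Lemma trXq (x : F) j : tr n (x ^+ (2 ^ j)) = tr n x.
Proof.
elim: j => [|j IH]; first by rewrite expn0 expr1.
by rewrite expnSr exprM trX2.
Qed.

Lemma sqr_sum (I : finType) (G : I -> F) :
  (\sum_i G i) ^+ 2 = \sum_i G i ^+ 2.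
Proof.
apply: (big_morph (fun z : F => z ^+ 2)); last by rewrite expr0n.
by move=> u v; have := frob2 u v 1; rewrite expn1.
Qed.

Lemma tr_sqr (x : F) : tr n x ^+ 2 = tr n x.
Proof.
rewrite -{2}(trX2 x) /tr sqr_sum.
by apply: eq_bigr => i _; rewrite exprAC.
Qed.

Lemma tr01 (x : F) : tr n x = (trb n x)%:R.
Proof.
rewrite /trb; have := tr_sqr x; case: (eqVneq (tr n x) 0) => [->|nz] //= h.
rewrite mulr1n; apply: (mulIf nz).
by rewrite mul1r -expr2 h.
Qed.

Lemma natb_inj (a b : bool) : (a%:R : F) = b%:R -> a = b.
Proof.
by case: a; case: b => //= /eqP; rewrite ?mulr1n ?mulr0n ?oner_eq0 // eq_sym oner_eq0.
Qed.

Lemma trbD (x y : F) : trb n (x + y) = trb n x (+) trb n y.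
Proof.
have := trD x y; rewrite !tr01.
case: (trb n x); case: (trb n y); case: (trb n (x + y)) => //=;
  rewrite ?mulr1n ?mulr0n ?addr0 ?add0r ?(addrr_pchar2 hc) //.
all: try by move/eqP; rewrite ?oner_eq0 // eq_sym oner_eq0.
Qed.

Lemma trb0 : trb n (0 : F) = false.
Proof. by rewrite /trb tr0 eqxx. Qed.

End Tr.

Lemma sgnD (a b : bool) : sgn (a (+) b) = sgn a * sgn b.
Proof. by case: a; case: b; rewrite /sgn /= ?expr0 ?expr1 ?mulr1 ?mul1r ?mulrNN ?mulr1. Qed.

Lemma sgn_conj b : (sgn b)^* = sgn b.
Proof. by case: b; rewrite /sgn /= ?expr0 ?expr1 ?rmorph1 ?rmorphN1. Qed.

Lemma sgn_sqr b : sgn b * sgn b = 1.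
Proof. by rewrite -sgnD addbb. Qed.

Lemma sgn_neq0 b : sgn b != 0.
Proof. by case: b; rewrite /sgn /= ?expr0 ?expr1 ?oppr_eq0 oner_eq0. Qed.

Section Chi.
Variables (F : finFieldType) (n : nat).
Hypothesis hc : 2%N \in [pchar F].
Hypothesis hx : forall x : F, x ^+ (2 ^ n) = x.
Hypothesis ht : exists t : F, trb n t.

Definition chi (x : F) : algC := sgn (trb n x).

Lemma chiD x y : chi (x + y) = chi x * chi y.
Proof. by rewrite /chi trbD // sgnD. Qed.

Lemma chi0 : chi 0 = 1.
Proof. by rewrite /chi trb0. Qed.

Lemma sum_chi (b : F) : \sum_mu chi (mu * b) = if b == 0 then #|F|%:R else 0.
Proof.
case: eqP => [->|/eqP nz].
  by under eq_bigr do rewrite mulr0 chi0; rewrite sumr_const.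
case: ht => t Ht.
set S := \sum_mu _.
have : S = - S.
  rewrite {1}/S (reindex_inj (addrI (t / b))) /=.
  under eq_bigr do rewrite mulrDl divfK // addrC chiD.
  by rewrite -mulr_suml /chi Ht /sgn /= expr1 mulrN1.
move/eqP; rewrite -addr_eq0 -mulr2n mulrn_eq0 /=.
by move/eqP.
Qed.

End Chi.

Section Coord.
Variables (F : finFieldType) (n : nat).
Hypothesis hc : 2%N \in [pchar F].
Hypothesis hx : forall x : F, x ^+ (2 ^ n) = x.
Hypothesis hcard : #|F| = (2 ^ n)%N.
Variable alpha : 'I_n -> F.
Hypothesis hsd : self_dual alpha.

Definition bc i (x : F) := trb n (x * alpha i).
Definition phi (c : {ffun 'I_n -> bool}) : F := \sum_(i < n) (c i)%:R * alpha i.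

Lemma trbR (b : bool) (x : F) : tr n (b%:R * x) = b%:R * tr n x.
Proof. by case: b; rewrite /= ?mulr1n ?mulr0n ?mul1r ?mul0r ?tr0. Qed.

Lemma tr_phi c j : tr n (phi c * alpha j) = (c j)%:R.
Proof.
rewrite /phi mulr_suml tr_sum //.
rewrite (bigD1 j) //= big1 => [|i /negbTE nij]; last first.
  by rewrite -mulrA trbR // hsd nij mulr0.
by rewrite -mulrA trbR // hsd eqxx mulr1 addr0.
Qed.

Lemma phi_inj : injective phi.
Proof.
move=> c d E; apply/ffunP => j; apply: (natb_inj (F := F)).
by rewrite -tr_phi E tr_phi.
Qed.

Lemma x_coord (x : F) : x = phi [ffun i => bc i x].
Proof.
have : x \in codom phi.
  apply: inj_card_onto; first exact: phi_inj.
  by rewrite card_ffun card_bool card_ord hcard.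
case/codomP => c ->; congr phi; apply/ffunP => j.
rewrite ffunE /bc; apply: (natb_inj (F := F)).
by rewrite -tr01 // tr_phi.
Qed.

Lemma wt_eq (x : F) : wt alpha x = #|[set i | bc i x]|.
Proof.
rewrite /wt; case: pickP => [c /eqP Hc | H].
  have -> : c = [ffun i => bc i x].
    by apply: phi_inj; rewrite -x_coord Hc.
  by apply: eq_card => i; rewrite !inE ffunE.
by have := H [ffun i => bc i x]; rewrite {1}(x_coord x) eqxx.
Qed.

Definition ee (x : F) : algC := 'i ^+ wt alpha x.

Lemma ee_prod x : ee x = \prod_i (if bc i x then 'i else 1).
Proof.
rewrite /ee wt_eq -prodr_const big_mkcond /=.
by apply: eq_bigr => i _; rewrite inE.
Qed.

Lemma natb_sum (I : finType) (P : I -> bool) :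
  (\sum_i (P i)%:R : F) = (\big[addb/false]_i P i)%:R.
Proof.
symmetry; apply: (big_morph (fun b : bool => (b%:R : F))) => //.
by move=> a b; case: a; case: b; rewrite /= ?mulr1n ?mulr0n ?addr0 ?add0r ?(addrr_pchar2 hc).
Qed.

Lemma sgn_xor (I : finType) (P : I -> bool) :
  sgn (\big[addb/false]_i P i) = \prod_i sgn (P i).
Proof. by apply: (big_morph _ sgnD); rewrite /sgn expr0. Qed.

Lemma natb_neq0 (b : bool) : ((b%:R : F) != 0) = b.
Proof. by case: b; rewrite /= ?mulr1n ?mulr0n ?oner_eq0 ?eqxx. Qed.

Lemma sgn_trb_prod (y a : F) :
  sgn (trb n (y * a)) = \prod_i sgn (bc i a && bc i y).
Proof.
rewrite {1}(x_coord a) /phi mulr_sumr /trb tr_sum //.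
rewrite (eq_bigr (fun i => ((bc i a && bc i y)%:R : F))); last first.
  move=> i _; rewrite mulrCA trbR // (tr01 hc hx) ffunE.
  rewrite -/(bc i y); by case: (bc i a); case: (bc i y); rewrite /= ?mulr1n ?mulr0n ?mul1r ?mul0r.
by rewrite natb_sum natb_neq0 sgn_xor.
Qed.


Lemma ee_shift a y : ee (a + y) * (ee y)^* = ee a * sgn (trb n (y * a)).
Proof.
rewrite !ee_prod rmorph_prod -big_split sgn_trb_prod -big_split /=.
apply: eq_bigr => i _.
have -> : bc i (a + y) = bc i a (+) bc i y by rewrite /bc mulrDl trbD.
case: (bc i a); case: (bc i y) => /=;
  rewrite /sgn /= ?expr0 ?expr1 ?rmorph1 ?conjCi ?mulr1 ?mul1r ?mulrN1 ?mulrN -?expr2 ?sqrCi ?opprK //.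
Qed.

Lemma ee0 : ee 0 = 1.
Proof.
rewrite ee_prod big1 // => i _.
by rewrite /bc mul0r trb0.
Qed.

Lemma ee_neq0 x : ee x != 0.
Proof. by rewrite /ee expf_neq0 // neq0Ci. Qed.

End Coord.

Section Gen.
Variables (F : finFieldType) (n : nat).
Hypothesis hc : 2%N \in [pchar F].
Hypothesis hx : forall x : F, x ^+ (2 ^ n) = x.
Hypothesis ht : exists t : F, trb n t.

Definition TT (h : F -> algC) mu := \sum_x h x * chi n (mu * x).

Lemma normT h mu : TT h mu * (TT h mu)^* =
  \sum_a chi n (mu * a) * \sum_y h (a + y) * (h y)^*.
Proof.
rewrite /TT rmorph_sum mulr_suml.
under eq_bigr do rewrite mulr_sumr.
rewrite exchange_big /=.
under [RHS]eq_bigr do rewrite mulr_sumr.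
rewrite [RHS]exchange_big /=.
apply: eq_bigr => y _.
rewrite (reindex_inj (addIr y)) /=.
apply: eq_bigr => a _.
have cc : forall z : F, (chi n z)^* = chi n z by move=> z; exact: sgn_conj.
rewrite rmorphM /= cc mulrDr chiD //.
have E : chi n (mu * y) * chi n (mu * y) = 1 by apply: sgn_sqr.
transitivity (chi n (mu * a) * (h (a + y) * (h y)^*) * (chi n (mu * y) * chi n (mu * y))).
  by ring.
by rewrite E mulr1.
Qed.

Lemma addr_eq0_c2 (a b : F) : (b + a == 0) = (b == a).
Proof. by rewrite addr_eq0 oppr_pchar2. Qed.

Lemma card_neq0 : (#|F|%:R : algC) != 0.
Proof. by rewrite pnatr_eq0 -lt0n; apply/card_gt0P; exists 0. Qed.

Lemma Gmain (h u : F -> algC) (L : F -> F)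
 (Hd : forall a y, h (a + y) * (h y)^* = u a * chi n (y * L a))
 (u0 : u 0 = 1) (L0 : L 0 = 0) (unz : forall a, u a != 0) :
 (forall mu, TT h mu * (TT h mu)^* = #|F|%:R) <-> (forall a, L a = 0 -> a = 0).
Proof.
have E : forall mu, TT h mu * (TT h mu)^* =
   \sum_a chi n (mu * a) * (u a * (if L a == 0 then #|F|%:R else 0)).
  move=> mu; rewrite normT; apply: eq_bigr => a _.
  by under eq_bigr do rewrite Hd; rewrite -mulr_sumr sum_chi.
split.
- move=> H a La0; apply/eqP; apply: contraT => nz.
  have S1 : \sum_mu TT h mu * (TT h mu)^* * chi n (mu * a) = 0.
    under eq_bigr do rewrite H.
    by rewrite -mulr_sumr sum_chi // (negbTE nz) mulr0.
  have S2 : \sum_mu TT h mu * (TT h mu)^* * chi n (mu * a) = u a * #|F|%:R * #|F|%:R.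
    under eq_bigr do rewrite E mulr_suml.
    rewrite exchange_big /=.
    rewrite (eq_bigr (fun b => (u b * (if L b == 0 then #|F|%:R else 0)) *
                 (if b + a == 0 then #|F|%:R else 0))); last first.
      move=> b _; rewrite -(sum_chi hc hx ht (b + a)) mulr_sumr; apply: eq_bigr => mu _.
      by rewrite mulrDr chiD // mulrAC mulrC.
    rewrite (bigD1 a) //= big1 => [|b nba]; last by rewrite addr_eq0_c2 (negbTE nba) mulr0.
    by rewrite La0 eqxx addr_eq0_c2 eqxx addr0.
  move: S2; rewrite S1 => /esym /eqP.
  by rewrite !mulf_eq0 (negbTE (unz a)) (negbTE card_neq0).
- move=> Hinj mu; rewrite E (bigD1 0) //= big1 => [|a nz]; last first.
    case: eqP => [/Hinj ah|_]; first by rewrite ah eqxx in nz.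
    by rewrite !mulr0.
  by rewrite mulr0 chi0 u0 L0 eqxx !mul1r addr0.
Qed.

End Gen.

Lemma abs_eq (z : algC) m : (`|z| = sqrtC (2 ^+ m)) <-> z * z^* = (2 ^ m)%:R.
Proof.
rewrite natrX; split => H; first by rewrite -normCK H sqrtCK.
apply/eqP; rewrite -(eqrXn2 (n := 2)) // ?sqrtC_ge0 ?normr_ge0 ?exprn_ge0 ?ler0n //.
by rewrite sqrtCK normCK H.
Qed.

Lemma walsh_TT (F : finFieldType) n (g : F -> bool) mu :
  walsh n g mu = TT n (fun x => sgn (g x)) mu.
Proof. by rewrite /walsh /TT; apply: eq_bigr => x _; rewrite sgnD. Qed.

Lemma nega_TT (F : finFieldType) n (alpha : 'I_n -> F) (g : F -> bool) mu :
  nega_walsh alpha g mu = TT n (fun x => sgn (g x) * ee alpha x) mu.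
Proof. by rewrite /nega_walsh /TT; apply: eq_bigr => x _; rewrite sgnD mulrAC. Qed.

Section Spec.
Variables (F : finFieldType) (k : nat).
Hypothesis hc : 2%N \in [pchar F].
Hypothesis hx2 : forall x : F, x ^+ (2 ^ (2 * k)) = x.
Variable lam : F.
Let c := lam + lam ^+ (2 ^ k).
Let fq (x : F) := trb (2 * k) (lam * x ^+ (2 ^ k).+1).

Lemma qq (x : F) : (x ^+ (2 ^ k)) ^+ (2 ^ k) = x.
Proof. by rewrite -exprM -expnD addnn -mul2n hx2. Qed.

Lemma fq_shift a y : fq (a + y) (+) fq y = fq a (+) trb (2 * k) (y * (a ^+ (2 ^ k) * c)).
Proof.
rewrite /fq -!(trbD hc hx2) /trb; apply: (congr1 (fun z => z != 0)).
transitivity (tr (2 * k) (lam * (a * a ^+ (2 ^ k))) + tr (2 * k) (y * a ^+ (2 ^ k) * lam)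
   + tr (2 * k) (y * a ^+ (2 ^ k) * lam ^+ (2 ^ k))); last first.
  rewrite exprS /c.
  have -> : lam * (a * a ^+ (2 ^ k)) + y * (a ^+ (2 ^ k) * (lam + lam ^+ (2 ^ k))) =
     lam * (a * a ^+ (2 ^ k)) + y * a ^+ (2 ^ k) * lam + y * a ^+ (2 ^ k) * lam ^+ (2 ^ k) by ring.
  by rewrite !(trD _ hc).
rewrite !exprS (frob2 hc).
have -> : lam * ((a + y) * (a ^+ (2 ^ k) + y ^+ (2 ^ k))) + lam * (y * y ^+ (2 ^ k)) =
   lam * (a * a ^+ (2 ^ k)) + y * a ^+ (2 ^ k) * lam + lam * y ^+ (2 ^ k) * a
   + (lam * (y * y ^+ (2 ^ k)) + lam * (y * y ^+ (2 ^ k))) by ring.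
rewrite (addrr_pchar2 hc) addr0 !(trD _ hc).
congr (_ + _).
rewrite -(trXq hx2 (lam * y ^+ (2 ^ k) * a) k) !exprMn qq.
by congr (tr _ _); ring.
Qed.

Lemma LB : (forall a : F, a ^+ (2 ^ k) * c = 0 -> a = 0) <-> c != 0.
Proof.
split => H.
  apply/eqP => c0; have := H 1; rewrite c0 mulr0 => /(_ erefl) /eqP.
  by rewrite oner_eq0.
move=> a /eqP; rewrite mulf_eq0 (negbTE H) orbF expf_eq0 => /andP[_ /eqP] //.
Qed.

Lemma LN : (forall a : F, a ^+ (2 ^ k) * c + a = 0 -> a = 0) <-> c != 1.
Proof.
split => H.
  apply/eqP => c1; have := H 1; rewrite c1 expr1n mulr1 (addrr_pchar2 hc) => /(_ erefl) /eqP.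
  by rewrite oner_eq0.
move=> a Ha; apply/eqP; apply: contraT => anz; case/eqP: H.
have h1 : a ^+ (2 ^ k) * c = a.
  by move/eqP: Ha; rewrite addr_eq0 (oppr_pchar2 hc) => /eqP.
have cq : c ^+ (2 ^ k) = c by rewrite /c (frob2 hc) qq addrC.
have h2 : a * c = a ^+ (2 ^ k).
  by have := congr1 (fun z => z ^+ (2 ^ k)) h1; rewrite /= exprMn qq cq.
have cc1 : c * c = 1 by apply: (mulfI anz); rewrite mulr1 mulrA h2 h1.
have : (c + 1) ^+ 2 = 0.
  by rewrite sqrrD mulr2n (addrr_pchar2 hc) addr0 expr1n expr2 cc1 (addrr_pchar2 hc).
by move/eqP; rewrite expf_eq0 /= addr_eq0 (oppr_pchar2 hc) => /eqP.
Qed.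

End Spec.
Unset Implicit Arguments.

Theorem proposition5 (F : finFieldType) (k : nat) (hk : (0 < k)%N)
  (hchar : 2%N \in [pchar F]) (hcard : #|F| = (2 ^ (2 * k))%N)
  (alpha : 'I_(2 * k) -> F) (hsd : self_dual alpha) (lam : F) :
  let f := fun x : F => trb (2 * k) (lam * x ^+ (2 ^ k).+1) in
  (negabent alpha f <-> lam + lam ^+ (2 ^ k) != 1) /\
  (bent_negabent alpha f <-> (lam + lam ^+ (2 ^ k) != 0) && (lam + lam ^+ (2 ^ k) != 1)).
Proof.
move=> f.
have hc := hchar.
have hx2 : forall x : F, x ^+ (2 ^ (2 * k)) = x by move=> x; rewrite -hcard expf_card.
have ht : exists t : F, trb (2 * k) t.
  have i0lt : (0 < 2 * k)%N by rewrite muln_gt0 hk.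
  exists (alpha (Ordinal i0lt) * alpha (Ordinal i0lt)).
  by rewrite /trb hsd eqxx oner_eq0.
have f0 : f 0 = false by rewrite /f expr0n /= mulr0 trb0.
have HB : bent (2 * k) f <-> lam + lam ^+ (2 ^ k) != 0.
  have E : bent (2 * k) f <-> (forall mu, TT (2 * k) (fun x => sgn (f x)) mu *
                (TT (2 * k) (fun x => sgn (f x)) mu)^* = #|F|%:R).
    rewrite /bent hcard; split=> H mu.
    - by have := (abs_eq _ _).1 (H mu); rewrite walsh_TT.
    - by apply/(abs_eq _ _).2; rewrite walsh_TT H.
  apply: (iff_trans E); apply: (iff_trans _ (LB k lam)).
  apply: (Gmain hc hx2 ht (u := fun a => sgn (f a))
            (L := fun a => a ^+ (2 ^ k) * (lam + lam ^+ (2 ^ k)))).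
  - by move=> a y; rewrite sgn_conj -sgnD /f (fq_shift hc hx2) sgnD.
  - by rewrite f0 /sgn expr0.
  - by rewrite expr0n expn_eq0 /= mulr0n mul0r.
  - by move=> a; exact: sgn_neq0.
have HN : negabent alpha f <-> lam + lam ^+ (2 ^ k) != 1.
  have E : negabent alpha f <-> (forall mu, TT (2 * k) (fun x => sgn (f x) * ee alpha x) mu *
                (TT (2 * k) (fun x => sgn (f x) * ee alpha x) mu)^* = #|F|%:R).
    rewrite /negabent hcard; split=> H mu.
    - by have := (abs_eq _ _).1 (H mu); rewrite nega_TT.
    - by apply/(abs_eq _ _).2; rewrite nega_TT H.
  apply: (iff_trans E); apply: (iff_trans _ (LN hc hx2 lam)).
  apply: (Gmain hc hx2 ht (u := fun a => sgn (f a) * ee alpha a)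
            (L := fun a => a ^+ (2 ^ k) * (lam + lam ^+ (2 ^ k)) + a)).
  - move=> a y; rewrite rmorphM /= sgn_conj.
    transitivity ((sgn (f (a + y)) * sgn (f y)) * (ee alpha (a + y) * (ee alpha y)^*)).
      by ring.
    rewrite -sgnD /f (fq_shift hc hx2) sgnD (ee_shift hc hx2 hcard hsd) [y * (_ + a)]mulrDr chiD // /chi.
    by ring.
  - by rewrite f0 ee0 // /sgn expr0 mulr1.
  - by rewrite expr0n expn_eq0 /= mulr0n mul0r add0r.
  - by move=> a; rewrite mulf_neq0 ?sgn_neq0 ?ee_neq0.
split; first exact: HN.
rewrite /bent_negabent; split => [[hb hn]|/andP[h0 h1]].
  by apply/andP; split; [exact/HB.1 | exact/HN.1].
by split; [exact/HB.2 | exact/HN.2].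
Qed.
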